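(* Let $c>1$, let $m=m_1\cdots m_c\in S_c$, and let $K$ be the set partition of $S_c$ whose only part with more than one element is the set of cyclic shifts $\{m_am_{a+1}\cdots m_cm_1\cdots m_{a-1}:1\le a\le c\}$. Then for every $j\in\{1,2,\ldots,c\}$, in the $K$-equivalence on $S_{c+1}$ we have $j\rightharpoonup m\equiv m\leftharpoonup(j+1)$ and $m\leftharpoonup j\equiv (j+1)\rightharpoonup m$.
   Context: Permutations are written in one-line notation as words. For a word $w$ and a positive integer $i$, $i\rightharpoonup w$ denotes the word obtained by increasing by $1$ each letter of $w$ that is $\ge i$ and then prepending $i$; $w\leftharpoonup i$ is obtained by increasing by $1$ each letter of $w$ that is $\ge i$ and then appending $i$ at the right end. The order permutation (standardization) of a word $u$ of distinct positive integers of length $\ell$ is the unique $\pi\in S_\ell$ with $\pi_i<\pi_j$ iff $u_i<u_j$. The $K$-equivalence on $S_n$ is generated by declaring $\phi\equiv\psi$ whenever $\phi=aub$, $\psi=avb$ for words $a,b,u,v$ with $u,v$ of length $c$ whose order permutations lie in the same part of $K$. *)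

(* Defs.v *)
(* permutations as words (seq nat) in one-line notation. *)
From Stdlib Require Import Relations.
From mathcomp Require Import all_boot.
Set Implicit Arguments. Unset Strict Implicit. Unset Printing Implicit Defensive.

Definition inS (n : nat) (w : seq nat) : bool := perm_eq w (iota 1 n).

Definition shiftge (i : nat) (w : seq nat) : seq nat :=
  map (fun x => if i <= x then x.+1 else x) w.

Definition lharp (i : nat) (w : seq nat) : seq nat := i :: shiftge i w.
Definition rharp (w : seq nat) (i : nat) : seq nat := rcons (shiftge i w) i.

Definition stdz (u : seq nat) : seq nat :=
  map (fun x => (count (fun y => y < x) u).+1) u.

Definition cyc_shifts (m : seq nat) : seq (seq nat) :=
  [seq rot a m | a <- iota 0 (size m)].

Definition sameK (m p q : seq nat) : bool :=
  (p == q) || ((p \in cyc_shifts m) && (q \in cyc_shifts m)).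

Definition kstep (c : nat) (m : seq nat) (n : nat) (phi psi : seq nat) : Prop :=
  inS n phi /\ inS n psi /\
  exists a b u v : seq nat,
    [/\ phi = a ++ u ++ b, psi = a ++ v ++ b, size u = c, size v = c
      & sameK m (stdz u) (stdz v)].

Definition Keq (c : nat) (m : seq nat) (n : nat) : relation (seq nat) :=
  clos_refl_sym_trans (seq nat) (kstep c m n).

(* Main.v *)
Require Import Defs.
From Stdlib Require Import Relations.
From mathcomp Require Import all_boot.
From mathcomp Require Import zify.
Set Implicit Arguments.

Lemma count_lt_iota x a n : count (fun y => y < x) (iota a n) = minn (x - a) n.
Proof.
elim: n a => [|n IH] a /=; first by lia.
rewrite IH; case: (ltnP a x) => H /=; lia.
Qed.

Lemma stdz_id c m : inS c m -> stdz m = m.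
Proof.
move=> Hm; rewrite /stdz; transitivity (map id m); last exact: map_id.
apply/eq_in_map => x xm.
have := xm; rewrite (perm_mem Hm) mem_iota => /andP [H1 H2].
rewrite (permP Hm) count_lt_iota; lia.
Qed.

Lemma stdz_map_in (f : nat -> nat) s :
  {in s &, forall x y, (f x < f y) = (x < y)} -> stdz (map f s) = stdz s.
Proof.
move=> Hf; rewrite /stdz -map_comp; apply/eq_in_map => x xs /=.
rewrite count_map; congr S; apply: eq_in_count => y ys /=; exact: Hf.
Qed.

Lemma stdz_rot k u : stdz (rot k u) = rot k (stdz u).
Proof.
rewrite /stdz map_rot; congr rot; apply: eq_map => x.
have P : perm_eq (rot k u) u by rewrite perm_rot.
by rewrite (permP P).
Qed.

Lemma cyc_shiftsP m p : reflect (exists2 a, a < size m & p = rot a m) (p \in cyc_shifts m).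
Proof.
apply: (iffP mapP) => [[a]|[a Ha ->]]; last by exists a; rewrite ?mem_iota.
by rewrite mem_iota => /andP [_ Ha] ->; exists a.
Qed.

Lemma cyc_rot m p k : k <= size m -> p \in cyc_shifts m -> rot k p \in cyc_shifts m.
Proof.
move=> Hk /cyc_shiftsP [a Ha ->]; rewrite rot_add_mod ?(ltnW Ha) //.
case: leqP => H.
  case: (ltnP (k + a) (size m)) => H2; first by apply/cyc_shiftsP; exists (k + a).
  have -> : k + a = size m by apply/eqP; rewrite eqn_leq H H2.
  by rewrite rot_size; apply/cyc_shiftsP; exists 0; rewrite ?rot0 //; lia.
by apply/cyc_shiftsP; exists (k + a - size m) => //; lia.
Qed.

Lemma kstep_rot c m n a u b k :
  inS n (a ++ u ++ b) -> size u = c -> size m = c -> k <= c ->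
  stdz u \in cyc_shifts m -> kstep c m n (a ++ u ++ b) (a ++ rot k u ++ b).
Proof.
move=> Hin Hu Hm Hk Hs; split => //; split.
  rewrite /inS; apply: perm_trans Hin.
  by rewrite perm_cat2l perm_cat2r perm_rot.
exists a, b, u, (rot k u); split => //; first by rewrite size_rot.
rewrite /sameK Hs stdz_rot cyc_rot ?orbT //; lia.
Qed.

Definition sh j := fun x => if j <= x then x.+1 else x.

Lemma sh_mono j x y : (sh j x < sh j y) = (x < y).
Proof. rewrite /sh; case: (leqP j x); case: (leqP j y); lia. Qed.

Lemma sh_inj j : injective (sh j).
Proof. move=> x y; rewrite /sh; case: (leqP j x); case: (leqP j y); lia. Qed.

Lemma inS_lharp c m j : inS c m -> 1 <= j <= c.+1 -> inS c.+1 (j :: shiftge j m).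
Proof.
move=> Hm Hj.
have um : uniq m by rewrite (perm_uniq Hm) iota_uniq.
have us : uniq (j :: shiftge j m).
  rewrite /= (map_inj_uniq (@sh_inj j)) um andbT.
  apply/mapP => [[x _]]; case: (leqP j x); lia.
have sub : {subset j :: shiftge j m <= iota 1 c.+1}.
  move=> y; rewrite inE mem_iota => /orP [/eqP ->|/mapP [x xm ->]]; first lia.
  move: xm; rewrite (perm_mem Hm) mem_iota; case: (leqP j x); lia.
have Hsz2 : size (iota 1 c.+1) <= size (j :: shiftge j m) by rewrite size_iota /= size_map (perm_size Hm) size_iota.
have [Hsz Heq] := uniq_min_size us sub Hsz2.
by apply: uniq_perm => //; rewrite iota_uniq.
Qed.

Lemma shiftge_notin j s : j \notin s -> shiftge j.+1 s = shiftge j s.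
Proof.
move=> H; apply/eq_in_map => x xs; have : x != j by apply: contraNneq H => <-.
case: (leqP j.+1 x); case: (leqP j x); lia.
Qed.

Definition gj j := fun x => if x == j then j.+1 else x.

Lemma stdz_swap j s : j.+1 \notin s ->
  stdz (map (gj j) s) = stdz s.
Proof.
move=> H2; apply: stdz_map_in => x y xs ys.
have nx2 : x != j.+1 by apply: contraNneq H2 => <-.
have ny2 : y != j.+1 by apply: contraNneq H2 => <-.
rewrite /gj; move: nx2 ny2; case: (x =P j) => [->|?]; case: (y =P j) => [->|?] => ? ?; apply/idP/idP; lia.
Qed.

Lemma gj_id j s : j \notin s -> map (gj j) s = s.
Proof.
move=> H; transitivity (map id s); last exact: map_id.
apply/eq_in_map => x xs; rewrite /gj; case: eqP => // E.
by move: H; rewrite -E xs.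
Qed.

Theorem lemma2p4 (c : nat) (m : seq nat) :
  1 < c -> inS c m ->
  forall j : nat, 1 <= j <= c ->
    Keq c m c.+1 (lharp j m) (rharp m j.+1) /\
    Keq c m c.+1 (rharp m j) (lharp j.+1 m).
Proof.
move=> Hc Hm j Hj.
have szm : size m = c by rewrite (perm_size Hm) size_iota.
have sm : stdz m = m := @stdz_id c m Hm.
have um : uniq m by rewrite (perm_uniq Hm) iota_uniq.
have Hsrc := @inS_lharp c m j Hm.
have jm : j \in m by rewrite (perm_mem Hm) mem_iota; lia.
have mcyc : m \in cyc_shifts m by apply/cyc_shiftsP; exists 0; rewrite ?rot0 //; lia.
move: Hm sm um Hsrc mcyc szm.
case/splitPr: jm => A0 B0 Hm sm um Hsrc mcyc szm.
have jA0 : j \notin A0.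
  apply: contraTN um => jA; rewrite cat_uniq; apply/negP => /and3P [_ /hasPn H _].
  by move: (H j (mem_head _ _)); rewrite /= jA.
have jB0 : j \notin B0 by move: um; rewrite cat_uniq /= => /and3P [_ _ /andP [ ]].
set A := shiftge j A0; set B := shiftge j B0.
have shm : shiftge j (A0 ++ j :: B0) = A ++ j.+1 :: B by rewrite /shiftge map_cat /= leqnn.
have shm1 : shiftge j.+1 (A0 ++ j :: B0) = A ++ j :: B.
  rewrite /shiftge map_cat /= ltnn -!/(shiftge _ _) !shiftge_notin //.
have Hs : inS c.+1 (j :: A ++ j.+1 :: B) by rewrite -shm; apply: Hsrc; lia.
have stdu : stdz (A ++ j.+1 :: B) = A0 ++ j :: B0.
  by rewrite -shm /shiftge -/(sh j) stdz_map_in // => x y _ _; apply: sh_mono.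
have usrc : uniq (j :: A ++ j.+1 :: B) by rewrite (perm_uniq Hs) iota_uniq.
have u1 : j \notin A ++ j.+1 :: B by case/andP: usrc.
have u2 : uniq (A ++ j.+1 :: B) by case/andP: usrc.
have jA : j \notin A by apply: contra u1; rewrite mem_cat => ->.
have jB : j \notin B by apply: contra u1; rewrite mem_cat inE => ->; rewrite !orbT.
have j1B : j.+1 \notin B by move: u2; rewrite cat_uniq /= => /and3P [_ _ /andP []].
have j1A : j.+1 \notin A.
  apply: contraTN u2 => H; rewrite cat_uniq; apply/negP => /and3P [_ /hasPn H' _].
  by move: (H' _ (mem_head _ _)); rewrite /= H.
set m' := A0 ++ j :: B0.
have szu : size (A ++ j.+1 :: B) = c by rewrite -shm size_map.
have szm' : size m' = c by [].
have cu : stdz (A ++ j.+1 :: B) \in cyc_shifts m' by rewrite stdu.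
have r1 : rot (size A).+1 (A ++ j.+1 :: B) = B ++ rcons A j.+1.
  by rewrite -cat_rcons -(size_rcons A j.+1) rot_size_cat.
have r0 : rot (size A) (A ++ j.+1 :: B) = j.+1 :: B ++ A by rewrite rot_size_cat.
have kA : size A <= c by move: szu; rewrite size_cat /= => Hz; clear -Hz; lia.
have kA1 : (size A).+1 <= c by move: szu; rewrite size_cat /= => Hz; clear -Hz; lia.
have kB : size B <= c by move: szu; rewrite size_cat /= => Hz; clear -Hz; lia.
have kB1 : (size B).+1 <= c by move: szu; rewrite size_cat /= => Hz; clear -Hz; lia.
split.
- rewrite /lharp /rharp -/m' /m' shm shm1 -/m'.
  have Hs1 : inS c.+1 ([:: j] ++ (A ++ j.+1 :: B) ++ [::]) by rewrite cats0.
  have K1 := @kstep_rot c m' c.+1 [:: j] (A ++ j.+1 :: B) [::] (size A).+1 Hs1 szu szm' kA1 cu.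
  rewrite /= r1 !cats0 in K1.
  have [_ [Hi _]] := K1.
  apply: (rst_trans _ _ _ (j :: B ++ rcons A j.+1)); first by apply: rst_step.
  have E : j :: B ++ rcons A j.+1 = [::] ++ (j :: B ++ A) ++ [:: j.+1] by rewrite /= -cats1 catA.
  have Hi' : inS c.+1 ([::] ++ (j :: B ++ A) ++ [:: j.+1]) by rewrite -E.
  have sz2 : size (j :: B ++ A) = c by rewrite -szu /= !size_cat /= addnS addnC.
  have c2 : stdz (j :: B ++ A) \in cyc_shifts m'.
    rewrite -(@stdz_swap j); last by apply/negP; rewrite inE mem_cat => /or3P [/eqP Ej|H|H]; [by clear -Ej; lia | by rewrite H in j1B | by rewrite H in j1A].
    rewrite /= {1}/gj eqxx gj_id; last by rewrite mem_cat negb_or jB jA.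
    by rewrite -r0 stdz_rot; apply: cyc_rot; rewrite ?szm'.
  have K2 := @kstep_rot c m' c.+1 [::] _ [:: j.+1] (size B).+1 Hi' sz2 szm' kB1 c2.
  have r2 : rot (size B).+1 (j :: B ++ A) = A ++ j :: B.
    exact: (rot_size_cat (j :: B) A).
  rewrite r2 in K2.
  by apply: rst_step; rewrite E -cats1.
- rewrite /lharp /rharp -/m' /m' shm shm1 -/m'.
  have Hs2 : inS c.+1 ([::] ++ (A ++ j.+1 :: B) ++ [:: j]) by rewrite /= cats1 /inS perm_rcons.
  have K1 := @kstep_rot c m' c.+1 [::] _ [:: j] (size A) Hs2 szu szm' kA cu.
  rewrite /= r0 !cats1 in K1.
  have [_ [Hi _]] := K1.
  apply: (rst_trans _ _ _ (rcons (j.+1 :: B ++ A) j)); first by apply: rst_step.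
  have E : rcons (j.+1 :: B ++ A) j = [:: j.+1] ++ (B ++ A ++ [:: j]) ++ [::] by rewrite /= cats0 -cats1 catA.
  have Hi' : inS c.+1 ([:: j.+1] ++ (B ++ A ++ [:: j]) ++ [::]) by rewrite -E.
  have sz2 : size (B ++ A ++ [:: j]) = c by move: szu; rewrite !size_cat /= => Hz; clear -Hz; lia.
  have c2 : stdz (B ++ A ++ [:: j]) \in cyc_shifts m'.
    rewrite -(@stdz_swap j); last by apply/negP; rewrite !mem_cat inE => /or3P [H|H|/eqP Ej]; [by rewrite H in j1B | by rewrite H in j1A | by clear -Ej; lia].
    rewrite !map_cat /= !gj_id // /gj eqxx cats1 -r1 stdz_rot.
    by apply: cyc_rot; rewrite ?szm'.
  have K2 := @kstep_rot c m' c.+1 [:: j.+1] _ [::] (size B) Hi' sz2 szm' kB c2.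
  apply: rst_step; rewrite E; move: K2; rewrite rot_size_cat !cats0 -catA.
  by [].
Qed.
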